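(* Let $M$ be a finite index set with positive, not necessarily normalized, weights $w^r>0$ for $r\in M$. Put $\eta=\sum_{r\in M}w^r$ and $\mathcal{H}=-\sum_{r\in M}\frac{w^r}{\eta}\log\big(\frac{w^r}{\eta}\big)$. Let $M^s\subseteq M$ be nonempty with $|\neg M^s|>2$, where $\neg M^s=M\setminus M^s$. Define $w^{m,s}=\sum_{m\in M^s}w^m$, $w^{s,r}=w^r/w^{m,s}$ for $r\in M^s$, and $\mathcal{H}^s=-\sum_{r\in M^s}w^{s,r}\log(w^{s,r})$. Let $\mathcal{LB}[\eta]$ and $\mathcal{UB}[\eta]$ be real numbers with $0<\mathcal{LB}[\eta]\le\eta\le\mathcal{UB}[\eta]$, and set $$\bar\gamma=1-\sum_{r\in M^s}\frac{w^r}{\mathcal{UB}[\eta]}.$$ Then $\mathcal{LB}[\mathcal{H}]\le\mathcal{H}\le\mathcal{UB}[\mathcal{H}]$, where $$\mathcal{LB}[\mathcal{H}]=\frac{w^{m,s}}{\mathcal{UB}[\eta]}\Big[\mathcal{H}^s+\log\Big(\frac{\mathcal{LB}[\eta]}{w^{m,s}}\Big)\Big],$$ $$\mathcal{UB}[\mathcal{H}]=\frac{w^{m,s}}{\mathcal{LB}[\eta]}\Big[\mathcal{H}^s+\log\Big(\frac{\mathcal{UB}[\eta]}{w^{m,s}}\Big)\Big]-\bar\gamma\log\Big(\frac{\bar\gamma}{|\neg M^s|}\Big).$$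
   Context: Setting: a node of a planning belief tree holds a mixture belief with component set $M$ (data-association hypotheses) and unnormalized weights $w^r$. The cost $\mathcal{H}$ is the Shannon entropy of the normalized weights. The subset $M^s$ defines a simplified belief with renormalized weights $w^{s,r}$ and entropy $\mathcal{H}^s$. Computing $\eta$ requires all weights, so only lower and upper bounds $\mathcal{LB}[\eta]$ and $\mathcal{UB}[\eta]$ on it are assumed to be available. All logarithms use the same base. *)

(* Defs.v *)
From HB Require Import structures.
From mathcomp Require Import all_boot all_order all_algebra.
From mathcomp Require Import all_classical all_reals all_analysis.
Set Implicit Arguments. Unset Strict Implicit. Unset Printing Implicit Defensive.
Import Order.TTheory GRing.Theory Num.Theory.
Local Open Scope ring_scope.

Section Defs.
Variables (R : realType) (T : finType).

(* logarithm in base b (the common base of all logarithms) *)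
Definition logb (b x : R) : R := ln x / ln b.

Definition eta_tot (w : T -> R) (M : {set T}) : R := \sum_(r in M) w r.

Definition Hent (b : R) (w : T -> R) (M : {set T}) : R :=
  - \sum_(r in M) (w r / eta_tot w M) * logb b (w r / eta_tot w M).

Definition wms (w : T -> R) (Ms : {set T}) : R := \sum_(m in Ms) w m.

Definition Hs (b : R) (w : T -> R) (Ms : {set T}) : R :=
  - \sum_(r in Ms) (w r / wms w Ms) * logb b (w r / wms w Ms).

Definition gbar (w : T -> R) (Ms : {set T}) (UBeta : R) : R :=
  1 - \sum_(r in Ms) w r / UBeta.

Definition LB_H (b : R) (w : T -> R) (Ms : {set T}) (LBeta UBeta : R) : R :=
  wms w Ms / UBeta * (Hs b w Ms + logb b (LBeta / wms w Ms)).

Definition UB_H (b : R) (w : T -> R) (M Ms : {set T}) (LBeta UBeta : R) : R :=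
  wms w Ms / LBeta * (Hs b w Ms + logb b (UBeta / wms w Ms))
  - gbar w Ms UBeta * logb b (gbar w Ms UBeta / #|M :\: Ms|%:R).

End Defs.

(* Main.v *)
Require Import Defs.
From HB Require Import structures.
From mathcomp Require Import all_boot all_order all_algebra.
From mathcomp Require Import all_classical all_reals all_analysis.
From mathcomp Require Import ring lra.
Import Order.TTheory GRing.Theory Num.Theory.
Local Open Scope ring_scope.

Lemma ln_le_sub1 (R : realType) (x : R) : 0 < x -> ln x <= x - 1.
Proof.
move=> x0; have h := @le_ln1Dx R (x - 1).
rewrite (_ : 1 + (x - 1) = x) in h; last by ring.
apply: h; lra.
Qed.

Lemma ln3_ge1 (R : realType) : 1 <= ln (3 : R).
Proof.
have h1 : ln (5 / 6 : R) <= 5/6 - 1 by apply: ln_le_sub1; lra.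
have h2 : ln (6 / 5 : R) = - ln (5 / 6).
  rewrite -lnV ?posrE; last lra.
  by congr ln; field.
have h3 : ln ((6 / 5 : R) ^+ 6) = ln (6/5) *+ 6 by rewrite lnXn //; lra.
have h6 : (0:R) < (6/5) ^+ 6 by apply: exprn_gt0; lra.
have h7 : (6/5 : R) ^+ 6 <= 3.
  have e : (6/5 : R) ^+ 3 = 216 / 125 by rewrite !exprS expr0; field.
  have -> : (6/5 : R) ^+ 6 = (6/5) ^+ 3 * (6/5) ^+ 3 by rewrite -exprD.
  rewrite e.
  have h : (216 / 125 : R) <= 173/100 by lra.
  have h0 : (0:R) <= 216 / 125 by lra.
  nra.
have h4 : ln ((6 / 5 : R) ^+ 6) <= ln 3.
  by rewrite ler_ln ?posrE //; lra.
rewrite h3 h2 -[- ln _ *+ 6]mulr_natr in h4. lra.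
Qed.

Lemma sum_plogp (R : realType) (T : finType) (b : R) (w : T -> R) (A : {set T}) (d : R) :
  0 < ln b -> 0 < d -> (forall r, r \in A -> 0 < w r) ->
  \sum_(r in A) (w r / d) * logb b (w r / d) =
  (\sum_(r in A) w r * ln (w r) - ln d * \sum_(r in A) w r) / (d * ln b).
Proof.
move=> c0 d0 hw.
rewrite mulrBl mulr_suml [ln d * _]mulr_sumr mulr_suml -sumrB.
apply: eq_bigr => r hr; rewrite /logb ln_div ?posrE ?hw //.
field; apply/andP; split; rewrite ?gt_eqF //.
Qed.

Lemma sum_wlnw (R : realType) (T : finType) (w : T -> R) (A : {set T}) :
  (forall r, r \in A -> 0 < w r) ->
  \sum_(r in A) w r * ln (w r) <= (\sum_(r in A) w r) * ln (\sum_(r in A) w r).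
Proof.
move=> hw; rewrite mulr_suml; apply: ler_sum => r hr.
apply: ler_wpM2l; first exact/ltW/hw.
have hle : w r <= \sum_(r in A) w r.
  rewrite (bigD1 r) //= lerDl; apply: sumr_ge0 => i /andP[hi _]; exact/ltW/hw.
rewrite ler_ln ?posrE ?hw //; apply: lt_le_trans hle; exact: hw.
Qed.

Lemma mono_ent (R : realType) (x y n : R) : 0 < x -> x <= y -> y <= 1 -> 3 <= n ->
  y * ln (y / n) <= x * ln (x / n).
Proof.
move=> x0 xy y1 n3.
have y0 : 0 < y by lra.
have e1 : ln (y / n) = ln (x / n) + ln (y / x).
  rewrite -lnM ?posrE; [congr ln; field|..]; try apply: divr_gt0; lra.
have e2 : x * ln (y / x) <= y - x.
  have h := @ln_le_sub1 _ _ (divr_gt0 y0 x0).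
  have : x * ln (y / x) <= x * (y / x - 1) by rewrite ler_pM2l.
  suff -> : x * (y / x - 1) = y - x by [].
  field; lra.
have e3 : ln (y / n) <= -1.
  have : ln (y / n) <= ln (1/3).
    rewrite ler_ln ?posrE; try (apply: divr_gt0; lra).
    rewrite ler_pdivrMr; last lra. rewrite mulrAC ler_pdivlMr; lra.
  have l13 : ln (1/3 : R) = ln 1 - ln 3 by rewrite ln_div // posrE; lra.
  rewrite l13 ln1. have := ln3_ge1 R. lra.
rewrite e1 in e3 *. nra.
Qed.

Theorem theorem2 (R : realType) (T : finType) (b : R) (w : T -> R)
    (M Ms : {set T}) (LBeta UBeta : R) :
  1 < b ->
  (forall r, r \in M -> 0 < w r) ->
  Ms \subset M ->
  Ms != finset.set0 ->
  (2 < #|M :\: Ms|)%N ->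
  0 < LBeta -> LBeta <= eta_tot w M -> eta_tot w M <= UBeta ->
  LB_H b w Ms LBeta UBeta <= Hent b w M /\
  Hent b w M <= UB_H b w M Ms LBeta UBeta.
Proof.
move=> hb hw sub ne n3 hL hLe hUe.
have c0 : 0 < ln b := ln_gt0 hb.
set Mc := M :\: Ms.
have hwMs : forall r, r \in Ms -> 0 < w r by move=> r /(fintype.subsetP sub) /hw.
have hwMc : forall r, r \in Mc -> 0 < w r.
  by move=> r; rewrite finset.in_setD => /andP[_ /hw].
have hsplit : forall F : T -> R,
    \sum_(r in M) F r = \sum_(r in Ms) F r + \sum_(r in Mc) F r.
  by move=> F; rewrite (big_setID Ms) /= (finset.setIidPr sub).
set W := \sum_(r in Ms) w r.
set V := \sum_(r in Mc) w r.
set S := \sum_(r in Ms) w r * ln (w r).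
set S' := \sum_(r in Mc) w r * ln (w r).
have W0 : 0 < W.
  have /finset.set0Pn [x xMs] := ne.
  rewrite /W (bigD1 x) //=.
  have h : 0 <= \sum_(i in Ms | i != x) w i.
    by apply: sumr_ge0 => i /andP[/hwMs/ltW].
  have := hwMs x xMs; lra.
have V0 : 0 < V.
  have : Mc != finset.set0 by rewrite -card_gt0; apply: leq_trans n3.
  move=> /finset.set0Pn [x xMc].
  rewrite /V (bigD1 x) //=.
  have h : 0 <= \sum_(i in Mc | i != x) w i.
    by apply: sumr_ge0 => i /andP[/hwMc/ltW].
  have := hwMc x xMc; lra.
have eta_e : eta_tot w M = W + V by rewrite /eta_tot hsplit.
have SW : S <= W * ln W := @sum_wlnw _ _ _ _ hwMs.
have SV : S' <= V * ln V := @sum_wlnw _ _ _ _ hwMc.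
have n0 : (0 : R) < #|Mc|%:R by rewrite ltr0n; apply: leq_trans n3.
have gibbs : V * ln (W + V) - S' <= - (V * ln (V / (W + V) / #|Mc|%:R)).
  have EE : 0 < W + V by lra.
  set g := V / (W + V) / #|Mc|%:R.
  have g0 : 0 < g by rewrite /g; apply: divr_gt0 => //; apply: divr_gt0.
  have h : \sum_(r in Mc) (w r * ln g + w r * ln (W + V) - w r * ln (w r))
        <= \sum_(r in Mc) (g * (W + V) - w r).
    apply: ler_sum => r hr.
    have wr := hwMc r hr.
    have hl := @ln_le_sub1 _ (g * (W + V) / w r) (divr_gt0 (mulr_gt0 g0 EE) wr).
    have p1 : 0 < g * (W + V) by exact: mulr_gt0.
    rewrite (ln_div p1 wr) (lnM g0 EE) in hl.
    have : w r * (ln g + ln (W + V) - ln (w r)) <= w r * (g * (W + V) / w r - 1).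
      by rewrite ler_pM2l.
    have -> : w r * (g * (W + V) / w r - 1) = g * (W + V) - w r.
      by field; rewrite gt_eqF.
    lra.
  rewrite sumrB big_split /= -!mulr_suml sumrB sumr_const -/V -/S' in h.
  have e : g * (W + V) *+ #|Mc| = V.
    by rewrite -mulr_natr /g; field; rewrite !gt_eqF.
  rewrite e in h. lra.
set E := W + V in gibbs *.
have E0 : 0 < E by rewrite /E; lra.
have hsum : forall (A : {set T}) (F : T -> R) (d : R), \sum_(r in A) (F r / d) = (\sum_(r in A) F r) / d.
  by move=> A F d; rewrite -mulr_suml.
have Hent_e : Hent b w M = - ((S + S' - ln E * E) / (E * ln b)).
  rewrite /Hent (@sum_plogp _ _ _ _ _ _ c0); last by move=> r /hw.
    by rewrite !hsplit eta_e.
  by rewrite eta_e.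
have Hs_e : Hs b w Ms = - ((S - ln W * W) / (W * ln b)).
  by rewrite /Hs /wms (@sum_plogp _ _ _ _ _ _ c0).
have gb_e : gbar w Ms UBeta = 1 - W / UBeta by rewrite /gbar hsum.
rewrite /LB_H /UB_H gb_e Hs_e Hent_e /wms -/W /logb.
rewrite eta_e -/E in hLe hUe.
have U0 : 0 < UBeta by lra.
have gb0 : 0 < 1 - W / UBeta.
  rewrite subr_gt0 ltr_pdivrMr // mul1r; rewrite /E in hUe; lra.
rewrite !ln_div ?posrE //.
have Ee : E = W + V by [].
clearbody W V S S' E.
have lLE : ln LBeta <= ln E by rewrite ler_ln ?posrE.
have lEU : ln E <= ln UBeta by rewrite ler_ln ?posrE.
have lWE : ln W <= ln E by rewrite ler_ln ?posrE // Ee; lra.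
have lVE : ln V <= ln E by rewrite ler_ln ?posrE // Ee; lra.
have X0 : W * ln W <= W * ln E by apply: ler_wpM2l; lra.
have Y0 : V * ln V <= V * ln E by apply: ler_wpM2l; lra.
have XL : W * ln LBeta <= W * ln E by apply: ler_wpM2l; lra.
have XU : W * ln E <= W * ln UBeta by apply: ler_wpM2l; lra.
have iUE : UBeta^-1 <= E^-1 by rewrite lef_pV2 ?posrE.
have iEL : E^-1 <= LBeta^-1 by rewrite lef_pV2 ?posrE.
have iE0 : 0 < E^-1 by rewrite invr_gt0.
have iU0 : 0 < UBeta^-1 by rewrite invr_gt0.
have eqL : W / UBeta * (- ((S - ln W * W) / (W * ln b)) + (ln LBeta - ln W) / ln b)
    = ((W * ln LBeta - S) * UBeta^-1) / ln b.
  by field; rewrite !gt_eqF.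
have eqH : - ((S + S' - ln E * E) / (E * ln b))
    = (((W * ln E - S) + (V * ln E - S')) * E^-1) / ln b.
  by rewrite Ee; field; rewrite !gt_eqF // -Ee.
rewrite eqH.
split.
  rewrite eqL.
  rewrite ler_pM2r ?invr_gt0 //.
  have h1 : (W * ln LBeta - S) * UBeta^-1 <= (W * ln E - S) * UBeta^-1.
    by rewrite ler_pM2r //; lra.
  have h2 : (W * ln E - S) * UBeta^-1 <= (W * ln E - S) * E^-1.
    by apply: ler_wpM2l; lra.
  have h3 : (W * ln E - S) * E^-1 <= ((W * ln E - S) + (V * ln E - S')) * E^-1.
    by rewrite ler_pM2r //; lra.
  lra.
have eqU : W / LBeta * (- ((S - ln W * W) / (W * ln b)) + (ln UBeta - ln W) / ln b)
    - (1 - W / UBeta) * ((ln (1 - W / UBeta) - ln #|M :\: Ms|%:R) / ln b)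
    = (((W * ln UBeta - S) * LBeta^-1) - (1 - W / UBeta) * (ln (1 - W / UBeta) - ln #|M :\: Ms|%:R)) / ln b.
  by field; rewrite !gt_eqF.
rewrite eqU ler_pM2r ?invr_gt0 //.
have gle : V / E <= 1 - W / UBeta.
  have -> : V / E = 1 - W * E^-1 by rewrite Ee; field; rewrite gt_eqF // -Ee.
  have : W * UBeta^-1 <= W * E^-1 by apply: ler_wpM2l; lra.
  lra.
have n3' : (3 : R) <= #|M :\: Ms|%:R by rewrite (ler_nat R 3).
have m := @mono_ent _ (V / E) (1 - W / UBeta) #|M :\: Ms|%:R (divr_gt0 V0 E0) gle
  ltac:(have := divr_gt0 W0 U0; lra) n3'.
rewrite ln_div ?posrE // in m.
have a1 : (W * ln E - S) * E^-1 <= (W * ln E - S) * LBeta^-1 by apply: ler_wpM2l; lra.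
have a2 : (W * ln E - S) * LBeta^-1 <= (W * ln UBeta - S) * LBeta^-1.
  by rewrite ler_pM2r ?invr_gt0 //; lra.
have b1 : (V * ln E - S') * E^-1 <= - (V * ln (V / E / #|M :\: Ms|%:R)) * E^-1.
  by rewrite ler_pM2r //; exact: gibbs.
lra.
Qed.
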